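(* Fix an integer $t\geq 1$ and a real $\alpha$ with $0<\alpha<1-\frac{1}{\sqrt{2}}$. Then, as $m\to\infty$ through values for which $\alpha m$ is an integer, \[ R_t(\alpha m, m)\leq \left(1-\frac{1}{2^t}\right)2^m-\frac{\sqrt{2^t-1}}{2^t(2+\sqrt{2})}\,2^{ m \left(\frac{1}{2}+\alpha \log_2(1+\sqrt{2})\right)}(1+o(1)). \]
   Context: For a $t\times n$ matrix $\mathbf{v}$ over $\mathbb{F}_q$ with rows $\overline{v}_1,\dots,\overline{v}_t$, its $t$-weight is $\mathrm{wt}^{(t)}(\mathbf{v})=\left|\bigcup_{i=1}^t \mathrm{supp}(\overline{v}_i)\right|$, and $d^{(t)}(\mathbf{u},\mathbf{v})=\mathrm{wt}^{(t)}(\mathbf{u}-\mathbf{v})$. For a linear code $C\subseteq\mathbb{F}_q^n$ and $t\in\mathbb{N}$, let $C^t$ be the set of $t\times n$ matrices all of whose rows lie in $C$. The $t$-th generalized covering radius $R_t(C)$ is the smallest integer $\rho$ such that for every $\mathbf{v}\in\mathbb{F}_q^{t\times n}$ there is $\mathbf{c}\in C^t$ with $d^{(t)}(\mathbf{v},\mathbf{c})\leq \rho$. Binary Reed–Muller codes $\mathrm{RM}(r,m)\subseteq\mathbb{F}_2^{2^m}$ ($0\le r\le m$) are defined recursively: $\mathrm{RM}(0,m)=\{\overline{0},\overline{1}\}$, $\mathrm{RM}(m,m)=\mathbb{F}_2^{2^m}$, and for $1\leq r\leq m-1$, $\mathrm{RM}(r,m)=\{(\overline{u},\overline{u}+\overline{v})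 : \overline{u}\in \mathrm{RM}(r,m-1),\ \overline{v}\in\mathrm{RM}(r-1,m-1)\}$. It is a linear code of length $2^m$ and dimension $\sum_{i=0}^r\binom{m}{i}$. Write $R_t(r,m)=R_t(\mathrm{RM}(r,m))$. *)

(* Defs.v *)
From mathcomp Require Import all_boot.
Set Implicit Arguments. Unset Strict Implicit. Unset Printing Implicit Defensive.

(* Words of length n over F_2 (F_2 encoded as bool, + as xor). *)
Definition word (n : nat) := {ffun 'I_n -> bool}.
Definition tmatrix (t n : nat) := {ffun 'I_t -> word n}.

(* Binary Reed-Muller code RM(r,m), as a membership test on bit sequences of
   length 2^m, following the recursive (u | u+v) definition:
   RM(0,m) = {0,1}, RM(m,m) = F_2^(2^m), and for 1 <= r <= m-1,
   RM(r,m) = {(u, u+v) : u in RM(r,m-1), v in RM(r-1,m-1)}.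
   Given w = (a, b) with |a| = |b| = 2^(m-1), w = (u, u+v) forces u = a, v = a+b. *)
Fixpoint inRM (r m : nat) (w : seq bool) : bool :=
  match m with
  | 0 => size w == 1
  | m'.+1 =>
      (size w == 2 ^ m) &&
      (if r == 0 then (w == nseq (2 ^ m) false) || (w == nseq (2 ^ m) true)
       else if m <= r then true
       else inRM r m' (take (2 ^ m') w) &&
            inRM r.-1 m' [seq x.1 (+) x.2 | x <- zip (take (2 ^ m') w) (drop (2 ^ m') w)])
  end.

Definition RM (r m : nat) : pred (word (2 ^ m)) :=
  fun w => inRM r m [seq w i | i <- enum 'I_(2 ^ m)].

Definition tdist (t n : nat) (u v : tmatrix t n) : nat :=
  #|[set j : 'I_n | [exists i : 'I_t, u i j != v i j]]|.

Definition tcovers (t n : nat) (C : pred (word n)) (rho : nat) : bool :=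
  [forall v : tmatrix t n, [exists c : tmatrix t n,
      [forall i : 'I_t, C (c i)] && (tdist v c <= rho)]].

(* t-th generalized covering radius: the smallest rho such that rho covers.
   (Taken among rho <= n; rho = n always covers when C is nonempty, so this is
   the smallest such integer.) *)
Definition gen_cov_radius (t n : nat) (C : pred (word n)) : nat :=
  \big[minn/n]_(rho < n.+1 | tcovers t C rho) rho.

Definition Rt (t r m : nat) : nat := @gen_cov_radius t (2 ^ m) (@RM r m).

(* Main.v *)
Require Import Defs.
From Stdlib Require Import Reals.

Module Helpers.
From Stdlib Require Import Reals Lra Lia ZArith.
From mathcomp Require Import all_boot zify.
Set Implicit Arguments. Unset Strict Implicit. Unset Printing Implicit Defensive.


Definition zipxor (s1 s2 : seq bool) := [seq x.1 (+) x.2 | x <- zip s1 s2].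

Lemma inRM_S r m w : inRM r m.+1 w = (size w == 2 ^ m.+1) &&
  (if r == 0 then (w == nseq (2 ^ m.+1) false) || (w == nseq (2 ^ m.+1) true)
   else if m.+1 <= r then true
   else inRM r m (take (2 ^ m) w) && inRM r.-1 m (zipxor (take (2 ^ m) w) (drop (2 ^ m) w))).
Proof. by []. Qed.

Lemma zipxor_nseq n b : zipxor (nseq n b) (nseq n b) = nseq n false.
Proof. rewrite /zipxor; by elim: n => //= n ->; rewrite addbb. Qed.

Lemma zipxor_self s : zipxor s s = nseq (size s) false.
Proof. rewrite /zipxor; by elim: s => //= x s ->; rewrite addbb. Qed.

Lemma zipxor_neg s : zipxor s (map negb s) = nseq (size s) true.
Proof. rewrite /zipxor; by elim: s => //= x s ->; case: x. Qed.

Lemma zipxor_negl s : zipxor (map negb s) s = nseq (size s) true.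
Proof. rewrite /zipxor; by elim: s => //= x s ->; case: x. Qed.

Lemma zipxorK s1 s2 : size s1 = size s2 -> zipxor s1 (zipxor s1 s2) = s2.
Proof.
rewrite /zipxor; elim: s1 s2 => [|x s1 IH] [|y s2] //= [] /IH ->; by rewrite addKb.
Qed.

Lemma size_zipxor s1 s2 : size s1 = size s2 -> size (zipxor s1 s2) = size s1.
Proof. by move=> H; rewrite size_map size_zip H minnn. Qed.

Lemma nth_zipxor s1 s2 k : size s1 = size s2 -> k < size s1 ->
  nth false (zipxor s1 s2) k = nth false s1 k (+) nth false s2 k.
Proof.
move=> H Hk; rewrite (nth_map (false, false)); last by rewrite size_zip H minnn -H.
by rewrite nth_zip.
Qed.

Lemma exp2S m : 2 ^ m.+1 = 2 ^ m + 2 ^ m.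
Proof. by rewrite expnS mul2n addnn. Qed.

Lemma const_RM r m b : inRM r m (nseq (2 ^ m) b).
Proof.
elim: m r b => [|m IH] r b; first by [].
rewrite inRM_S size_nseq eqxx /=.
case: (r == 0); first by case: (b); rewrite eqxx ?orbT.
case: (m.+1 <= r) => //.
rewrite exp2S take_nseq ?leq_addr // drop_nseq addnK zipxor_nseq.
by rewrite !IH.
Qed.

Lemma full_RM m s : size s = 2 ^ m -> inRM m m s.
Proof. case: m => [|m] /= ->; by rewrite ?eqxx ?leqnn. Qed.

Definition sdist t n (U W : 'I_t -> seq bool) : nat :=
  count (fun j => [exists i, nth false (U i) j != nth false (W i) j]) (iota 0 n).

Definition scovers t n (P : seq bool -> bool) rho :=
  forall U : 'I_t -> seq bool, (forall i, size (U i) = n) ->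
  exists W : 'I_t -> seq bool, (forall i, P (W i)) /\ (forall i, size (W i) = n) /\
     sdist n U W <= rho.

Definition seqw n (w : word n) : seq bool := [seq w i | i <- enum 'I_n].
Definition sw n (s : seq bool) : word n := [ffun j : 'I_n => nth false s j].

Lemma size_seqw n (w : word n) : size (seqw w) = n.
Proof. by rewrite size_map size_enum_ord. Qed.

Lemma nth_seqw n (w : word n) (j : 'I_n) : nth false (seqw w) j = w j.
Proof. by rewrite (nth_map j) ?size_enum_ord // nth_ord_enum. Qed.

Lemma seqw_sw n s : size s = n -> seqw (sw n s) = s.
Proof.
move=> Hs; apply: (@eq_from_nth _ false); first by rewrite size_seqw.
move=> j; rewrite size_seqw => Hj.
by rewrite (nth_seqw _ (Ordinal Hj)) ffunE.
Qed.

Lemma tdist_sdist t n (v c : tmatrix t n) :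
  tdist v c = sdist n (fun i => seqw (v i)) (fun i => seqw (c i)).
Proof.
rewrite /tdist /sdist cardsE cardE /enum_mem size_filter -enumT.
rewrite -val_enum_ord count_map; apply: eq_count => j /=.
by apply: eq_existsb => i; rewrite !nth_seqw.
Qed.

Lemma scovers_tcovers t m r rho :
  scovers t (2 ^ m) (inRM r m) rho -> tcovers t (@RM r m) rho.
Proof.
move=> H; apply/forallP => v.
have [W [HW1 [HW2 HW3]]] := H (fun i => seqw (v i)) (fun i => size_seqw _).
apply/existsP; exists [ffun i => sw (2 ^ m) (W i)].
apply/andP; split.
  apply/forallP => i; rewrite /RM ffunE; move: (HW1 i); rewrite -{1}(seqw_sw (HW2 i)); exact.
rewrite tdist_sdist; move: HW3; rewrite /sdist.
set a := count _ _; set b := count _ _.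
suff -> : a = b by [].
by apply: eq_count => j /=; apply: eq_existsb => i; rewrite ffunE seqw_sw.
Qed.

Lemma tcovers_scovers t m r rho :
  tcovers t (@RM r m) rho -> scovers t (2 ^ m) (inRM r m) rho.
Proof.
move=> /forallP H U HU.
have /existsP [c /andP [/forallP Hc Hd]] := H [ffun i => sw (2 ^ m) (U i)].
exists (fun i => seqw (c i)); split; first by move=> i; exact: Hc.
split; first by move=> i; rewrite size_seqw.
move: Hd; rewrite tdist_sdist /sdist.
set a := count _ _; set b := count _ _.
suff -> : a = b by [].
by apply: eq_count => j /=; apply: eq_existsb => i; rewrite ffunE seqw_sw.
Qed.

Lemma bigmin_leq (I : eqType) (s : seq I) (P : pred I) F x j :
  j \in s -> P j -> \big[minn/x]_(i <- s | P i) F i <= F j.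
Proof.
elim: s => [|a s IH] //; rewrite in_cons big_cons => /orP [/eqP -> ->|Hj Pj].
  exact: geq_minl.
case: (P a); last exact: IH.
by rewrite geq_min IH ?orbT.
Qed.

Lemma Rt_le t r m rho : tcovers t (@RM r m) rho -> Rt t r m <= rho.
Proof.
move=> H; rewrite /Rt /gen_cov_radius.
case: (ltnP rho (2 ^ m).+1) => Hr.
  apply: (@bigmin_leq _ _ _ _ _ (Ordinal Hr)) => //; exact: mem_index_enum.
apply: leq_trans (ltnW Hr).
elim/big_ind: _ => //.
  by move=> x y Hx _; rewrite geq_min Hx.
by move=> i _; rewrite -ltnS.
Qed.

Lemma tcovers_full t r m : tcovers t (@RM r m) (2 ^ m).
Proof.
apply/forallP => v; apply/existsP; exists [ffun i => [ffun j => false]].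
apply/andP; split.
  apply/forallP => i; rewrite /RM ffunE.
  have -> : [seq ([ffun=> false] : word (2^m)) i0 | i0 <- enum 'I_(2 ^ m)] = nseq (2^m) false.
    apply: (@eq_from_nth _ false); first by rewrite size_map size_enum_ord size_nseq.
    move=> j; rewrite size_map size_enum_ord => Hj.
    by rewrite (nth_map (Ordinal Hj)) ?size_enum_ord // ffunE nth_nseq Hj.
  exact: const_RM.
rewrite /tdist; apply: leq_trans (max_card _) _; by rewrite card_ord.
Qed.

Lemma Rt_covers t r m : tcovers t (@RM r m) (Rt t r m).
Proof.
rewrite /Rt /gen_cov_radius.
elim/big_ind: _ => //; first exact: tcovers_full.
by move=> x y Hx Hy; rewrite /minn; case: ifP.
Qed.


Lemma scovers_rec t m r rho1 rho2 : r != 0 -> r <= m ->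
  scovers t (2 ^ m) (inRM r m) rho1 -> scovers t (2 ^ m) (inRM r.-1 m) rho2 ->
  scovers t (2 ^ m.+1) (inRM r m.+1) (rho1 + rho2).
Proof.
move=> Hr0 Hrm H1 H2 U HU.
set N := 2 ^ m.
have HN : 2 ^ m.+1 = N + N by rewrite exp2S.
have HA : forall i, size (take N (U i)) = N by move=> i; rewrite size_takel // HU HN leq_addr.
have [W1 [HW1a [HW1b HW1c]]] := H1 _ HA.
have HDs : forall i, size (drop N (U i)) = N by move=> i; rewrite size_drop HU HN addnK.
have HB : forall i, size (zipxor (W1 i) (drop N (U i))) = N.
  by move=> i; rewrite size_zipxor HW1b // HDs.
have [W2 [HW2a [HW2b HW2c]]] := H2 _ HB.
exists (fun i => W1 i ++ zipxor (W1 i) (W2 i)).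
have HZ : forall i, size (zipxor (W1 i) (W2 i)) = N.
  by move=> i; rewrite size_zipxor HW1b // HW2b.
split.
  move=> i; rewrite inRM_S size_cat HZ HW1b -/N HN eqxx /=.
  rewrite (negbTE Hr0) leqNgt ltnS Hrm /=.
  rewrite take_size_cat // drop_size_cat // zipxorK ?HW1a ?HW2a //.
  by rewrite HW1b HW2b.
split; first by move=> i; rewrite size_cat HZ HW1b HN.
rewrite /sdist HN iotaD count_cat add0n.
apply: leq_add.
  apply: leq_trans HW1c; rewrite /sdist leq_eqVlt; apply/orP; left; apply/eqP.
  apply: eq_in_count => j; rewrite mem_iota add0n => /andP [_ Hj] /=.
  apply: eq_existsb => i; by rewrite nth_take // nth_cat HW1b Hj.
apply: leq_trans HW2c; rewrite /sdist leq_eqVlt; apply/orP; left; apply/eqP.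
rewrite -(addn0 N) iotaDl count_map addn0.
apply: eq_in_count => k; rewrite mem_iota add0n => /andP [_ Hk] /=.
apply: eq_existsb => i.
rewrite nth_cat HW1b ltnNge leq_addr /= addKn.
rewrite nth_zipxor ?HW1b ?HW2b // nth_zipxor ?HW1b ?HDs // nth_drop.
by case: (nth false (W1 i) k); case: (nth false (U i) (N + k)); case: (nth false (W2 i) k).
Qed.

Lemma Rt_rec t r m : r != 0 -> r <= m ->
  Rt t r m.+1 <= Rt t r m + Rt t r.-1 m.
Proof.
move=> Hr0 Hrm; apply: Rt_le; apply: scovers_tcovers.
apply: scovers_rec => //; apply: tcovers_scovers; exact: Rt_covers.
Qed.

Lemma Rt_full t m : Rt t m m = 0.
Proof.
apply/eqP; rewrite -leqn0; apply: Rt_le.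
apply/forallP => v; apply/existsP; exists v; apply/andP; split.
  apply/forallP => i; rewrite /RM; apply: full_RM; exact: size_seqw.
rewrite /tdist leqn0 cards_eq0; apply/eqP/setP => j; rewrite !inE.
by apply/negbTE; rewrite negb_exists; apply/forallP => i; rewrite negbK.
Qed.

Lemma count_split (T : Type) (a p : pred T) s :
  count a s = count (fun x => a x && p x) s + count (fun x => a x && ~~ p x) s.
Proof.
elim: s => //= x s ->; case: (a x); case: (p x) => /=; lia.
Qed.

Lemma majority t n (U : 'I_t -> seq bool) (P : pred nat) (l : seq 'I_t) :
  uniq l -> exists b : 'I_t -> bool,
  count P (iota 0 n) <=
  count (fun x => P x && all (fun i => nth false (U i) x == b i) l) (iota 0 n) * 2 ^ size l.
Proof.
elim: l => [|i l IH] /=.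
  move=> _; exists (fun _ => false); rewrite muln1.
  by apply: eq_leq; apply: eq_count => x; rewrite andbT.
move=> /andP [Hil /IH [b Hb]].
set Q := fun x => P x && all (fun i => nth false (U i) x == b i) l.
pose c1 := count (fun x => Q x && nth false (U i) x) (iota 0 n).
pose c0 := count (fun x => Q x && ~~ nth false (U i) x) (iota 0 n).
have Hs : count Q (iota 0 n) = c1 + c0 by apply: count_split.
have Hall : forall (beta : bool) x, all (fun j => nth false (U j) x == (fun j => if j == i then beta else b j) j) l = all (fun j => nth false (U j) x == b j) l.
  move=> beta x; apply: eq_in_all => j Hj /=.
  by have -> : (j == i) = false by apply/negbTE; apply: contraNneq Hil => <-.
case: (leqP c0 c1) => Hc.
  exists (fun j => if j == i then true else b j).
  apply: leq_trans Hb _; rewrite expnS mulnA leq_mul2r; apply/orP; right.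
  have -> : count (fun x => [&& P x, (nth false (U i) x == (if i == i then true else b i)) & all (fun j => nth false (U j) x == (if j == i then true else b j)) l]) (iota 0 n) = c1.
    apply: eq_count => x; rewrite Hall eqxx /Q; by case: (P x); case: (nth false (U i) x); case: (all _ _).
  rewrite Hs; lia.
exists (fun j => if j == i then false else b j).
apply: leq_trans Hb _; rewrite expnS mulnA leq_mul2r; apply/orP; right.
have -> : count (fun x => [&& P x, (nth false (U i) x == (if i == i then false else b i)) & all (fun j => nth false (U j) x == (if j == i then false else b j)) l]) (iota 0 n) = c0.
  apply: eq_count => x; rewrite Hall eqxx /Q; by case: (P x); case: (nth false (U i) x); case: (all _ _).
rewrite Hs; lia.
Qed.

Local Open Scope R_scope.

Fixpoint corr (phi : seq R) (s : seq bool) : R :=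
  match phi, s with
  | x :: p, b :: s' => (if b then - x else x) + corr p s'
  | _, _ => 0
  end.

Definition sumR (T : Type) (l : seq T) (f : T -> R) : R := foldr (fun x acc => f x + acc) 0 l.

Fixpoint lin (m : nat) : seq (seq bool) :=
  match m with
  | 0%N => [:: [:: false]]
  | m'.+1 => [seq s ++ s | s <- lin m'] ++ [seq s ++ map negb s | s <- lin m']
  end.

Lemma sumR_cat (T : Type) (l1 l2 : seq T) f : sumR (l1 ++ l2) f = sumR l1 f + sumR l2 f.
Proof. rewrite /sumR; elim: l1 => [|x l1 IH] /=; [lra | rewrite IH; lra]. Qed.

Lemma sumR_map (T U : Type) (l : seq T) (g : T -> U) f : sumR (map g l) f = sumR l (fun x => f (g x)).
Proof. by elim: l => //= x l IH; rewrite /sumR /= in IH *; rewrite IH. Qed.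

Lemma sumR_ext_in (T : eqType) (l : seq T) f g : (forall x, x \in l -> f x = g x) -> sumR l f = sumR l g.
Proof.
elim: l => //= x l IH H; rewrite /sumR /= in IH *.
rewrite H ?mem_head // IH // => y Hy; apply: H; by rewrite in_cons Hy orbT.
Qed.

Lemma sumR_add (T : Type) (l : seq T) f g : sumR l (fun x => f x + g x) = sumR l f + sumR l g.
Proof. rewrite /sumR; elim: l => [|x l IH] /=; [lra | rewrite IH; lra]. Qed.

Lemma sumR_scale (T : Type) (l : seq T) c f : sumR l (fun x => c * f x) = c * sumR l f.
Proof. rewrite /sumR; elim: l => [|x l IH] /=; [lra | rewrite IH; lra]. Qed.

Lemma corr_cat p1 p2 s1 s2 : size p1 = size s1 -> corr (p1 ++ p2) (s1 ++ s2) = corr p1 s1 + corr p2 s2.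
Proof.
elim: p1 s1 => [|x p1 IH] [|b s1] //= H; first lra.
case: H => /IH ->; lra.
Qed.

Lemma corr_neg p s : corr p (map negb s) = - corr p s.
Proof. elim: p s => [|x p IH] [|b s] /=; try lra. rewrite IH; case: b => /=; lra. Qed.

Lemma size_lin m : size (lin m) = (2 ^ m)%N.
Proof. elim: m => //= m IH; by rewrite size_cat !size_map IH exp2S. Qed.

Lemma size_in_lin m s : s \in lin m -> size s = (2 ^ m)%N.
Proof.
elim: m s => [|m IH] s /=; first by rewrite inE => /eqP ->.
rewrite mem_cat => /orP [] /mapP [s0 /IH Hs ->]; by rewrite size_cat ?size_map Hs exp2S.
Qed.

Lemma pow2R m : INR (2 ^ m) = 2 ^ m.
Proof. elim: m => //= m IH; rewrite exp2S plus_INR IH; lra. Qed.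

Definition normsq (phi : seq R) := sumR phi (fun x => x * x).

Lemma parseval m phi : size phi = (2 ^ m)%N ->
  sumR (lin m) (fun s => corr phi s ^ 2) = 2 ^ m * normsq phi.
Proof.
elim: m phi => [|m IH] phi /=.
  case: phi => [|x [|y p]] //= _; rewrite /sumR /normsq /=; lra.
move=> Hs.
rewrite -(cat_take_drop (2 ^ m) phi).
set p0 := take _ phi; set p1 := drop _ phi.
have H0 : size p0 = (2 ^ m)%N by rewrite size_takel // Hs exp2S leq_addr.
have H1 : size p1 = (2 ^ m)%N by rewrite size_drop Hs exp2S addnK.
rewrite sumR_cat !sumR_map.
rewrite (@sumR_ext_in _ _ _ (fun s => (corr p0 s + corr p1 s) ^ 2)); last first.
  by move=> s Hs'; rewrite corr_cat // H0 (size_in_lin Hs').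
rewrite (@sumR_ext_in _ _ (fun x => corr (p0 ++ p1) (x ++ map negb x) ^ 2) (fun s => (corr p0 s - corr p1 s) ^ 2)); last first.
  by move=> s Hs'; rewrite corr_cat ?corr_neg // H0 (size_in_lin Hs').
rewrite -sumR_add.
rewrite (@sumR_ext_in _ _ _ (fun s => 2 * corr p0 s ^ 2 + 2 * corr p1 s ^ 2)); last first.
  move=> s _; ring.
rewrite sumR_add !sumR_scale IH // IH // /normsq sumR_cat; ring.
Qed.

Lemma sumR_max (T : eqType) (l : seq T) f : l <> [::] ->
  exists2 x, x \in l & sumR l f <= INR (size l) * f x.
Proof.
elim: l => [|a l IH] // _.
case: l IH => [|b l] IH.
  exists a; first by rewrite mem_head.
  rewrite /sumR /=; lra.
have [x Hx Hs] := IH ltac:(discriminate).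
move: Hs; set L := b :: l => Hs.
have Hpos : 0 <= INR (size L) by apply: pos_INR.
case: (Rle_dec (f a) (f x)) => Ha.
  exists x; first by rewrite in_cons Hx orbT.
  change (sumR (a :: L) f) with (f a + sumR L f); change (size (a :: L)) with (size L).+1.
  rewrite S_INR; nra.
exists a; first by rewrite mem_head.
change (sumR (a :: L) f) with (f a + sumR L f); change (size (a :: L)) with (size L).+1.
rewrite S_INR; nra.
Qed.

Lemma inRM1_S m s : (0 < m)%N -> inRM 1 m.+1 s = [&& size s == (2 ^ m.+1)%N,
  inRM 1 m (take (2 ^ m) s) & inRM 0 m (zipxor (take (2 ^ m) s) (drop (2 ^ m) s))].
Proof.
move=> Hm; rewrite inRM_S.
have -> : (1 == 0)%N = false by [].
have -> : (m.+1 <= 1)%N = false by apply/negbTE; rewrite -ltnNge ltnS.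
by [].
Qed.

Lemma lin_RM m s : s \in lin m -> (0 < m)%N -> inRM 1 m s && inRM 1 m (map negb s).
Proof.
elim: m s => [|m IH] s Hs _ //.
have Hsz := size_in_lin Hs.
case: m IH Hs Hsz => [|m] IH Hs Hsz.
  by rewrite !inRM_S size_map Hsz.
have Hl : lin m.+2 = [seq s ++ s | s <- lin m.+1] ++ [seq s ++ map negb s | s <- lin m.+1] by [].
move: Hs; rewrite Hl mem_cat => /orP [] /mapP [s0 Hs0 Hs]; subst s.
  have Hs0z := size_in_lin Hs0.
  have /andP [Ha Hb] := IH s0 Hs0 isT.
  rewrite [inRM 1 m.+2 (s0 ++ s0)]inRM1_S // [inRM 1 m.+2 (map negb _)]inRM1_S // map_cat !size_cat size_map Hs0z -exp2S eqxx.
  rewrite !take_size_cat ?size_map // !drop_size_cat ?size_map // Ha Hb.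
  by rewrite zipxor_self zipxor_self size_map Hs0z !const_RM.
have Hs0z := size_in_lin Hs0.
have /andP [Ha Hb] := IH s0 Hs0 isT.
rewrite [inRM 1 m.+2 (s0 ++ _)]inRM1_S // [inRM 1 m.+2 (map negb _)]inRM1_S // map_cat !size_cat !size_map Hs0z -exp2S eqxx.
rewrite !take_size_cat ?size_map // !drop_size_cat ?size_map // Ha Hb.
rewrite mapK; last exact: negbK.
by rewrite zipxor_neg zipxor_negl ?size_map Hs0z !const_RM.
Qed.

Local Open Scope R_scope.

Lemma INR_addn (a b : nat) : INR (a + b)%N = INR a + INR b.
Proof. exact: plus_INR. Qed.

Lemma corr_count (T v w : nat -> bool) a n :
  corr [seq (if T x then (if v x then -1 else 1) else 0) | x <- iota a n] [seq w x | x <- iota a n]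
  = 2 * INR (count (fun x => T x && (v x == w x)) (iota a n)) - INR (count T (iota a n)).
Proof.
elim: n a => [|n IH] a /=; first lra.
rewrite IH !INR_addn.
case: (T a); case: (v a); case: (w a) => /=; lra.
Qed.

Lemma normsq_count (T v : nat -> bool) a n :
  normsq [seq (if T x then (if v x then -1 else 1) else 0) | x <- iota a n]
  = INR (count T (iota a n)).
Proof.
rewrite /normsq /sumR.
elim: n a => [|n IH] a /=; first lra.
rewrite IH !INR_addn.
case: (T a); case: (v a) => /=; lra.
Qed.

Lemma Rt_le_real t r m B :
  (forall U : 'I_t -> seq bool, (forall i, size (U i) = (2 ^ m)%N) ->
     exists W : 'I_t -> seq bool, (forall i, inRM r m (W i)) /\ (forall i, size (W i) = (2 ^ m)%N) /\
       INR (sdist (2 ^ m) U W) <= B) ->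
  INR (Rt t r m) <= B.
Proof.
move=> H.
have HB0 : 0 <= B.
  have [W [_ [_ HW]]] := H (fun _ => nseq (2 ^ m) false) (fun _ => size_nseq _ _).
  apply: Rle_trans HW; exact: pos_INR.
have [HI1 HI2] := base_Int_part B.
have HI0 : (0 <= Int_part B)%Z.
  have : (-1 < Int_part B)%Z by apply: lt_IZR; lra.
  lia.
set k := Z.to_nat (Int_part B).
have Hk : INR k = IZR (Int_part B) by rewrite INR_IZR_INZ /k Z2Nat.id.
have Hc : scovers t (2 ^ m) (inRM r m) k.
  move=> U HU; have [W [HW1 [HW2 HW3]]] := H U HU.
  exists W; split => //; split => //.
  have : (sdist (2 ^ m) U W < k.+1)%coq_nat.
    apply: INR_lt; rewrite S_INR Hk; lra.
  move/ltP; by rewrite ltnS.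
have := Rt_le (scovers_tcovers Hc) => /leP /le_INR Hle.
lra.
Qed.

Lemma sqrt_pow2R m : sqrt (2 ^ m) = sqrt 2 ^ m.
Proof.
elim: m => [|m IH] /=; first exact: sqrt_1.
rewrite sqrt_mult_alt ?IH //; lra.
Qed.

Lemma base_cover t' m (U : 'I_t'.+1 -> seq bool) : (0 < m)%N ->
  (forall i, size (U i) = (2 ^ m)%N) ->
  exists W : 'I_t'.+1 -> seq bool, (forall i, inRM 1 m (W i)) /\ (forall i, size (W i) = (2 ^ m)%N) /\
   INR (sdist (2 ^ m) U W) <= (1 - / 2 ^ (t'.+1)) * 2 ^ m - sqrt (2 ^ m / 2 ^ t') / 2.
Proof.
move=> Hm HU.
set N := (2 ^ m)%N.
pose l := [seq lift ord0 k | k <- enum 'I_t'].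
have ul : uniq l by rewrite map_inj_uniq ?enum_uniq //; exact: lift_inj.
have [b Hb] := @majority t'.+1 N U predT l ul.
have Hsl : size l = t' by rewrite size_map size_enum_ord.
rewrite Hsl count_predT size_iota in Hb.
set T := fun x => all (fun i => nth false (U i) x == b i) l.
set cT := count T (iota 0 N).
have HbT : (N <= cT * 2 ^ t')%N by apply: leq_trans Hb _.
pose g := fun x => if T x then (if nth false (U ord0) x then -1 else 1) else 0.
pose phi := [seq g x | x <- iota 0 N].
have Hphi : size phi = N by rewrite size_map size_iota.
have Hpar := parseval Hphi.
have Hnorm : normsq phi = INR cT by rewrite /phi /g normsq_count.
have Hne : lin m <> [::] by move=> E; have := size_lin m; rewrite E /= => /esym/eqP; rewrite expn_eq0.
have [s Hs Hmax] := sumR_max (fun s => corr phi s ^ 2) Hne.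
rewrite Hpar size_lin pow2R Hnorm in Hmax.
have H2m : 0 < 2 ^ m by apply: pow_lt; lra.
have HcT : INR cT <= corr phi s ^ 2 by nra.
have Habs : sqrt (INR cT) <= Rabs (corr phi s).
  rewrite -sqrt_Rsqr_abs Rsqr_pow2; exact: sqrt_le_1_alt.
have [w [Hw1 [Hw2 Hw3]]] : exists w, [/\ inRM 1 m w, size w = N & sqrt (INR cT) <= corr phi w].
  have /andP [Hr1 Hr2] := lin_RM Hs Hm.
  case: (Rle_dec 0 (corr phi s)) => Hsg.
    exists s; split => //; first exact: size_in_lin Hs.
    by rewrite -(Rabs_pos_eq _ Hsg).
  exists (map negb s); split => //; first by rewrite size_map (size_in_lin Hs).
  rewrite corr_neg -Rabs_left1 //; lra.
have Hwe : w = [seq nth false w x | x <- iota 0 N] by rewrite -{1}(mkseq_nth false w) Hw2.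
set A := count (fun x => T x && (nth false (U ord0) x == nth false w x)) (iota 0 N).
have HA : corr phi w = 2 * INR A - INR cT by rewrite Hwe /phi /g corr_count.
exists (fun i => if i == ord0 then w else nseq N (b i)).
split; first by move=> i; case: (i == ord0) => //; exact: const_RM.
split; first by move=> i; case: (i == ord0) => //; rewrite size_nseq.
have Hsd : (sdist N U (fun i => if i == ord0 then w else nseq N (b i)) + A = N)%N.
  rewrite /sdist /A -[RHS](size_iota 0 N) -(count_predC (fun x => T x && (nth false (U ord0) x == nth false w x))) addnC.
  congr (_ + _)%N; apply: eq_in_count => x; rewrite mem_iota add0n => /andP [_ Hx] /=.
  apply/existsP/idP.
    case=> i Hi; apply/negP => /andP [HT Ha]; move: Hi.
    case: (unliftP ord0 i) => [k ->|->].
      have Hk : lift ord0 k \in l by apply: map_f; rewrite mem_enum.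
      have Hn0 : (lift ord0 k == ord0) = false by apply/negbTE; rewrite eq_sym neq_lift.
      rewrite Hn0 nth_nseq Hx.
      by move/allP: HT => /(_ _ Hk) /eqP ->; rewrite eqxx.
    by rewrite eqxx Ha.
  move=> Hn; case HT: (T x).
    exists ord0; rewrite eqxx; move: Hn; by rewrite HT.
  move/negbT: HT => /allPn [i Hil Hi]; exists i.
  have Hi0 : i != ord0 by case/mapP: Hil => k _ ->; rewrite eq_sym neq_lift.
  by rewrite (negbTE Hi0) nth_nseq Hx.
have Hsd' : INR (sdist N U (fun i => if i == ord0 then w else nseq N (b i))) = INR N - INR A.
  have := f_equal INR Hsd; rewrite INR_addn; lra.
rewrite Hsd' /N pow2R.
have HX : 0 < 2 ^ t' by apply: pow_lt; lra.
have HcT' : 2 ^ m <= INR cT * 2 ^ t'.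
  by rewrite -pow2R -pow2R -mult_INR; apply: le_INR; apply/leP.
have Htau : 2 ^ m / 2 ^ t' <= INR cT.
  apply: (Rmult_le_reg_r (2 ^ t')) => //.
  rewrite /Rdiv Rmult_assoc Rinv_l; lra.
have Hsq : sqrt (2 ^ m / 2 ^ t') <= sqrt (INR cT) by apply: sqrt_le_1_alt.
have -> : (1 - / 2 ^ t'.+1) * 2 ^ m = 2 ^ m - (2 ^ m / 2 ^ t') / 2.
  rewrite /=; field; lra.
lra.
Qed.

Definition kappa t' := / (2 * sqrt (2 ^ t')).

Lemma base_real t' m : (0 < m)%N ->
  INR (Rt t'.+1 1 m) <= (1 - / 2 ^ (t'.+1)) * 2 ^ m - kappa t' * sqrt 2 ^ m.
Proof.
move=> Hm.
have -> : kappa t' * sqrt 2 ^ m = sqrt (2 ^ m / 2 ^ t') / 2.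
  have HX : 0 < sqrt (2 ^ t') by apply: sqrt_lt_R0; apply: pow_lt; lra.
  rewrite sqrt_div_alt; last by apply: pow_lt; lra.
  rewrite sqrt_pow2R /kappa; field; lra.
apply: Rt_le_real => U HU; exact: base_cover.
Qed.

Local Open Scope R_scope.

Lemma kappa_pos t' : 0 < kappa t'.
Proof.
rewrite /kappa; apply: Rinv_0_lt_compat.
have : 0 < sqrt (2 ^ t') by apply: sqrt_lt_R0; apply: pow_lt; lra.
lra.
Qed.

Lemma sqrt2_sq : sqrt 2 * sqrt 2 = 2.
Proof. apply: sqrt_sqrt; lra. Qed.

Lemma sqrt2_pos : 0 < sqrt 2.
Proof. apply: sqrt_lt_R0; lra. Qed.

Lemma main_bound t' (beta gamma : R) : 0 < beta -> 0 < gamma ->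
  beta + 1 = sqrt 2 * beta * gamma -> 1 + sqrt 2 <= beta * gamma ->
  forall m r, (1 <= r <= m)%N ->
  INR (Rt t'.+1 r m) <= (1 - / 2 ^ (t'.+1)) * 2 ^ m
     - kappa t' * sqrt 2 ^ m * ((1 + sqrt 2) ^ r.-1 - beta ^ r * gamma ^ m).
Proof.
move=> Hb Hg Hbg Hl.
have Hk := kappa_pos t'.
have Hs := sqrt2_pos; have Hss := sqrt2_sq.
have HF : forall m, 0 <= (1 - / 2 ^ (t'.+1)) * 2 ^ m.
  move=> m; apply: Rmult_le_pos; last by apply: pow_le; lra.
  have : / 2 ^ t'.+1 <= 1.
    rewrite -Rinv_1; apply: Rinv_le_contravar; first lra.
    apply: pow_R1_Rle; lra.
  lra.
elim=> [|m IH] r Hr; first by lia.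
have Hsm : 0 < sqrt 2 ^ m.+1 by apply: pow_lt.
case: (eqVneq r 1%N) => [->|Hr1].
  have := base_real t' (isT : (0 < m.+1)%N).
  have : 0 <= beta ^ 1 * gamma ^ m.+1 by apply: Rmult_le_pos; apply: pow_le; lra.
  move=> H1 H2 /=.
  have : 0 <= kappa t' * sqrt 2 ^ m.+1 * (beta ^ 1 * gamma ^ m.+1).
    apply: Rmult_le_pos => //; apply: Rmult_le_pos; lra.
  simpl in H1, H2 |- *; nra.
case: (eqVneq r m.+1) => [->|Hrm].
  rewrite Rt_full /=.
  have Hl1 : 1 <= 1 + sqrt 2 by lra.
  have H1 : (1 + sqrt 2) ^ m <= (1 + sqrt 2) ^ m.+1.
    rewrite /=; have := pow_le (1 + sqrt 2) m ltac:(lra); nra.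
  have H2 : (1 + sqrt 2) ^ m.+1 <= (beta * gamma) ^ m.+1 by apply: pow_incr; lra.
  rewrite Rpow_mult_distr in H2.
  have : 0 <= kappa t' * sqrt 2 ^ m.+1 * (beta ^ m.+1 * gamma ^ m.+1 - (1 + sqrt 2) ^ m).
    apply: Rmult_le_pos; [apply: Rmult_le_pos; lra | lra].
  have := HF m.+1; simpl; nra.
case: r Hr Hr1 Hrm => [|[|r']] Hr Hr1 Hrm //.
have Hr' : (r'.+2 <= m)%N by move: Hr Hrm; rewrite eqSS; lia.
have Hrec := Rt_rec t'.+1 (isT : r'.+2 != 0%N) Hr'.
move/leP/le_INR: Hrec; rewrite INR_addn => Hrec.
have IH1 := IH r'.+2 ltac:(apply/andP; split => //).
have IH2 := IH r'.+1 ltac:(apply/andP; split => //; lia).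
simpl predn in IH1, IH2 |- *.
set L := 1 + sqrt 2 in IH1 IH2 |- *.
have HL : sqrt 2 * L = L + 1 by rewrite /L; lra.
set F := (1 - / 2 ^ t'.+1) in IH1 IH2 |- *.
have E : kappa t' * sqrt 2 ^ m.+1 * (L ^ r'.+1 - beta ^ r'.+2 * gamma ^ m.+1)
   - (kappa t' * sqrt 2 ^ m * (L ^ r'.+1 - beta ^ r'.+2 * gamma ^ m)
      + kappa t' * sqrt 2 ^ m * (L ^ r' - beta ^ r'.+1 * gamma ^ m))
   = kappa t' * sqrt 2 ^ m * ((sqrt 2 * L - L - 1) * L ^ r'
        - (sqrt 2 * beta * gamma - beta - 1) * beta ^ r'.+1 * gamma ^ m).
  rewrite /=; ring.
have Z1 : sqrt 2 * L - L - 1 = 0 by lra.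
have Z2 : sqrt 2 * beta * gamma - beta - 1 = 0 by lra.
rewrite Z1 Z2 !Rmult_0_l Rminus_0_r Rmult_0_r in E.
have E2 : F * 2 ^ m.+1 = F * 2 ^ m + F * 2 ^ m by rewrite /=; ring.
change (r'.+2.-1) with r'.+1 in Hrec.
lra.
Qed.

Lemma exp_pow_INR x n : exp x ^ n = exp (INR n * x).
Proof.
elim: n => [|n IH]; first by rewrite /= Rmult_0_l exp_0.
rewrite S_INR -tech_pow_Rmult IH -exp_plus; congr exp; ring.
Qed.

Lemma exp_INR_ln x n : 0 < x -> exp (INR n * ln x) = x ^ n.
Proof. move=> Hx; by rewrite -exp_pow_INR exp_ln. Qed.

Lemma theorem21_aux (t : nat) (alpha : R) :
  (1 <= t)%coq_nat ->
  0 < alpha -> alpha < 1 - 1 / sqrt 2 ->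
  forall eps : R, 0 < eps ->
  exists M : nat, forall m r : nat, (M <= m)%coq_nat -> INR r = alpha * INR m ->
    INR (Rt t r m) <=
      (1 - 1 / 2 ^ t) * 2 ^ m
      - sqrt (2 ^ t - 1) / (2 ^ t * (2 + sqrt 2))
        * Rpower 2 (INR m * (1 / 2 + alpha * (ln (1 + sqrt 2) / ln 2)))
        * (1 - eps).
Proof.
case: t => [|t'] Ht; first lia.
move=> Ha0 Ha1 eps Heps.
have Hs := sqrt2_pos; have Hss := sqrt2_sq.
set s := sqrt 2 in Hs Hss Ha1 |- *.
set lam := 1 + s.
have Hlam : s * lam = lam + 1 by rewrite /lam; lra.
set q := alpha * (lam + 1).
have Hq1 : q < 1.
  have H1 : 1 - 1 / s = (s - 1) / s by field; lra.
  have H2 : alpha * s < s - 1.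
    rewrite H1 in Ha1; apply: (Rmult_lt_reg_r (/ s)); first by apply: Rinv_0_lt_compat.
    rewrite Rmult_assoc Rinv_r; last lra.
    move: Ha1; rewrite /Rdiv; lra.
  rewrite /q /lam.
  (* alpha * (2 + s) < 1  <=>  alpha * s * (2+s) < s  *)
  have : alpha * s * (2 + s) < (s - 1) * (2 + s) by apply: Rmult_lt_compat_r; lra.
  have -> : (s - 1) * (2 + s) = s by nra.
  move=> H3; apply: (Rmult_lt_reg_l s) => //; nra.
have Hq0 : 0 < q by rewrite /q /lam; nra.
set h := (/ q - 1) / 2.
have Hiq : 1 < / q.
  rewrite -Rinv_1; apply: Rinv_lt_contravar; lra.
have Hh : 0 < h by rewrite /h; lra.
have Hqh : q * (1 + h) < 1.
  rewrite /h; have : q * / q = 1 by field; lra.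
  nra.
set beta := lam * (1 + h).
have Hlampos : 0 < lam by rewrite /lam; lra.
have Hbeta : 0 < beta by rewrite /beta; nra.
set gamma := (beta + 1) / (s * beta).
set u := h / ((lam + 1) * (1 + h)).
have Hgu : gamma = 1 - u.
  have Hsb : s * beta = (lam + 1) * (1 + h) by rewrite /beta -Hlam; ring.
  rewrite /gamma Hsb /u /beta; field; split; lra.
have Hu1 : u < 1.
  rewrite /u; apply: (Rmult_lt_reg_r ((lam + 1) * (1 + h))); first nra.
  rewrite /Rdiv Rmult_assoc Rinv_l; nra.
have Hu0 : 0 < u by rewrite /u; apply: Rdiv_lt_0_compat; nra.
have Hg : 0 < gamma by lra.
have Hbg : beta + 1 = s * beta * gamma.
  rewrite /gamma; field; nra.
have Hbgl : lam <= beta * gamma.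
  have -> : beta * gamma = (beta + 1) / s by rewrite /gamma; field; nra.
  apply: (Rmult_le_reg_r s) => //; rewrite /Rdiv Rmult_assoc Rinv_l; last lra.
  rewrite /beta Rmult_1_r; nra.
set c := u - alpha * h.
have Hc : 0 < c.
  rewrite /c /u; apply: (Rmult_lt_reg_r ((lam + 1) * (1 + h))); first nra.
  rewrite Rmult_minus_distr_r /Rdiv Rmult_assoc Rinv_l; last nra.
  rewrite /q in Hqh; nra.
set eps' := Rmin eps (1 / 2).
have He1 : 0 < eps' by apply: Rmin_glb_lt; lra.
have He2 : eps' <= eps by apply: Rmin_l.
have He3 : eps' <= 1 / 2 by apply: Rmin_r.
set x := lam / (c * eps').
have [Hup _] := archimed x.
have Hx : 0 < x by rewrite /x; apply: Rdiv_lt_0_compat; nra.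
have Hz : (0 <= up x)%Z by apply: le_IZR; lra.
exists (Z.to_nat (up x)).+1 => m r HM Hr.
have HINRM : x < INR m.
  have : INR (Z.to_nat (up x)).+1 <= INR m by apply: le_INR.
  rewrite S_INR INR_IZR_INZ Z2Nat.id //; lra.
have Hm1 : (1 <= m)%coq_nat by lia.
have Hmpos : 0 < INR m by lra.
have Hr0 : 0 < INR r by rewrite Hr; nra.
have Hr1 : (1 <= r)%N.
  case: r Hr Hr0 => [|r] //= Hr Hr0; lra.
have Ha1' : alpha < 1.
  have Hq1' : alpha * (lam + 1) < 1 by exact: Hq1.
  nra.
have Hrm : (r <= m)%N.
  apply/leP; apply: INR_le; rewrite Hr; nra.
have Hmain := main_bound t' Hbeta Hg Hbg Hbgl (m := m) (r := r) ltac:(by rewrite Hr1 Hrm).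
have Hrr : r = (r.-1).+1 by case: r Hr1 {Hmain Hr Hr0 Hrm}.
have Hsmall : lam * ((1 + h) ^ r * gamma ^ m) <= eps'.
  have E1 : (1 + h) ^ r <= exp (INR r * h).
    rewrite -exp_pow_INR; apply: pow_incr; split; [lra | exact: exp_ineq1_le].
  have E2 : gamma ^ m <= exp (INR m * (- u)).
    rewrite -exp_pow_INR; apply: pow_incr; split; [lra|].
    rewrite Hgu; have := exp_ineq1_le (- u); lra.
  have E3 : (1 + h) ^ r * gamma ^ m <= exp (- (c * INR m)).
    have -> : - (c * INR m) = INR r * h + INR m * (- u) by rewrite Hr /c; ring.
    rewrite exp_plus; apply: Rmult_le_compat => //; apply: pow_le; lra.
  have E4 : 1 + c * INR m <= exp (c * INR m) by apply: exp_ineq1_le.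
  have E5 : exp (- (c * INR m)) * exp (c * INR m) = 1.
    rewrite -exp_plus; have -> : - (c * INR m) + c * INR m = 0 by ring.
    exact: exp_0.
  have E6 : lam <= c * eps' * INR m.
    have : x * (c * eps') = lam by rewrite /x; field; lra.
    have : 0 < c * eps' by nra.
    nra.
  have Hepos : 0 < exp (- (c * INR m)) by apply: exp_pos.
  have F1 : lam * ((1 + h) ^ r * gamma ^ m) <= lam * exp (- (c * INR m)) by apply: Rmult_le_compat_l; lra.
  have F2 : lam <= eps' * exp (c * INR m) by nra.
  have F3 : lam * exp (- (c * INR m)) <= eps' * exp (c * INR m) * exp (- (c * INR m)) by apply: Rmult_le_compat_r; lra.
  have F4 : eps' * exp (c * INR m) * exp (- (c * INR m)) = eps' by rewrite Rmult_assoc (Rmult_comm (exp _)) E5 Rmult_1_r.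
  lra.
have Hbr : beta ^ r = lam ^ r * (1 + h) ^ r by rewrite /beta Rpow_mult_distr.
have Hbound : beta ^ r * gamma ^ m <= eps' * lam ^ r.-1.
  rewrite Hbr {1}Hrr /=.
  have : 0 <= lam ^ r.-1 by apply: pow_le; lra.
  nra.
have Hln2 : 0 < ln 2 by rewrite -ln_1; apply: ln_increasing; lra.
have Hlns : ln s = ln 2 / 2.
  have : ln (s * s) = ln s + ln s by apply: ln_mult.
  rewrite Hss; lra.
have HRp : Rpower 2 (INR m * (1 / 2 + alpha * (ln lam / ln 2))) = s ^ m * lam ^ r.
  rewrite /Rpower.
  have -> : INR m * (1 / 2 + alpha * (ln lam / ln 2)) * ln 2 = INR m * ln s + INR r * ln lam.
    rewrite Hlns Hr; field; lra.
  by rewrite exp_plus !exp_INR_ln.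
rewrite HRp.
set X := 2 ^ t'.
have HX : 1 <= X by apply: pow_R1_Rle; lra.
have H2t : 2 ^ t'.+1 = 2 * X by [].
rewrite H2t.
set sx := sqrt X.
have Hsx : 0 < sx by apply: sqrt_lt_R0; lra.
have Hsxx : sx * sx = X by apply: sqrt_sqrt; lra.
set sq := sqrt (2 * X - 1).
have Hsq0 : 0 <= sq by apply: sqrt_pos.
have Hsq : sq <= s * sx.
  rewrite /sq /s /sx -sqrt_mult; [|lra|lra]; apply: sqrt_le_1_alt; lra.
set K := sq / (2 * X * (2 + s)).
have HK0 : 0 <= K.
  rewrite /K /Rdiv; apply: Rmult_le_pos => //; apply/Rlt_le/Rinv_0_lt_compat; nra.
have HKl : K * lam <= kappa t'.
  rewrite /K /kappa -/X -/sx.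
  have HA : 0 < 2 * X * (2 + s) by nra.
  have HB : 0 < 2 * sx by lra.
  have -> : sq / (2 * X * (2 + s)) * lam = sq * lam * / (2 * X * (2 + s)) by rewrite /Rdiv; ring.
  apply: (Rmult_le_reg_r (2 * X * (2 + s))) => //.
  rewrite Rmult_assoc Rinv_l; last lra.
  apply: (Rmult_le_reg_r (2 * sx)) => //.
  have -> : / (2 * sx) * (2 * X * (2 + s)) * (2 * sx) = 2 * X * (2 + s) by field; lra.
  rewrite /lam; rewrite -Hsxx; nra.
have Hk := kappa_pos t'.
have Hsm : 0 < s ^ m by apply: pow_lt.
have Hlr : 0 < lam ^ r.-1 by apply: pow_lt.
have Hlr' : lam ^ r = lam * lam ^ r.-1 by rewrite {1}Hrr.
rewrite Hlr'.
have HF : (1 - 1 / (2 * X)) * 2 ^ m = (1 - / 2 ^ t'.+1) * 2 ^ m by rewrite H2t /Rdiv Rmult_1_l.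
rewrite HF.
have Y1 : kappa t' * s ^ m * (lam ^ r.-1 - beta ^ r * gamma ^ m) >= kappa t' * s ^ m * (lam ^ r.-1 * (1 - eps')).
  apply: Rle_ge; apply: Rmult_le_compat_l; [nra | nra].
have Y2 : kappa t' * s ^ m * (lam ^ r.-1 * (1 - eps')) >= K * (s ^ m * (lam * lam ^ r.-1)) * (1 - eps).
  have : 0 <= s ^ m * lam ^ r.-1 by nra.
  have : 0 <= 1 - eps' by lra.
  have : K * lam * (1 - eps) <= kappa t' * (1 - eps').
    have : K * lam * (1 - eps) <= K * lam * (1 - eps') by apply: Rmult_le_compat_l; nra.
    have : K * lam * (1 - eps') <= kappa t' * (1 - eps') by apply: Rmult_le_compat_r; lra.
    lra.
  move=> H1 H2 H3; apply: Rle_ge.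
  have -> : K * (s ^ m * (lam * lam ^ r.-1)) * (1 - eps) = (K * lam * (1 - eps)) * (s ^ m * lam ^ r.-1) by ring.
  have -> : kappa t' * s ^ m * (lam ^ r.-1 * (1 - eps')) = (kappa t' * (1 - eps')) * (s ^ m * lam ^ r.-1) by ring.
  apply: Rmult_le_compat_r => //.
rewrite /K /lam /s in Y1 Y2 Hmain |- *.
lra.
Qed.

End Helpers.

Open Scope R_scope.

(* The (1 + o(1)) factor: for every eps > 0, for all large enough m with
   alpha*m = r an integer, the bound holds with (1 + o(1)) replaced by (1 - eps). *)
Theorem theorem21 (t : nat) (alpha : R) :
  (1 <= t)%nat ->
  0 < alpha -> alpha < 1 - 1 / sqrt 2 ->
  forall eps : R, 0 < eps ->
  exists M : nat, forall m r : nat, (M <= m)%nat -> INR r = alpha * INR m ->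
    INR (Rt t r m) <=
      (1 - 1 / 2 ^ t) * 2 ^ m
      - sqrt (2 ^ t - 1) / (2 ^ t * (2 + sqrt 2))
        * Rpower 2 (INR m * (1 / 2 + alpha * (ln (1 + sqrt 2) / ln 2)))
        * (1 - eps).
Proof.
  exact (@Helpers.theorem21_aux t alpha).
Qed.
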